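(* Let $\alpha\le 2$ and $\delta\ge 0$, where if $\alpha\neq0$ we additionally require $\delta\le 1/\alpha^2$. Let $$c(u,v)=1+\alpha^2\delta(1-2u)(1-2v)\exp\{\alpha(u-u^2+v-v^2)\},\quad (u,v)\in[0,1]^2.$$ Then $c$ is totally positive of order 2 ($TP_2$), i.e. $c(u_1,v_1)c(u_2,v_2)-c(u_1,v_2)c(u_2,v_1)\ge0$ for all $u_1<u_2$, $v_1<v_2$ in $[0,1]$; in fact $\frac{\partial^2\ln c(u,v)}{\partial u\,\partial v}\ge 0$ on $[0,1]^2$.
   Context: $c$ is the density of the copula $C(u,v)=uv+\delta(1-e^{\alpha(u-u^2)})(1-e^{\alpha(v-v^2)})$; the constraint $|\delta|\le1/\alpha^2$ (for $\alpha\le2$, $\alpha\ne0$) is the parameter range for which $C$ is a copula, and for $\alpha=0$ any $\delta$ is allowed. *)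

(* Defs.v *)
From Stdlib Require Import Reals.
From Coquelicot Require Import Coquelicot.
Open Scope R_scope.

Definition cdens (alpha delta u v : R) : R :=
  1 + alpha ^ 2 * delta * (1 - 2 * u) * (1 - 2 * v)
      * exp (alpha * (u - u ^ 2 + v - v ^ 2)).

Definition mixed_dlog (alpha delta u v : R) : R :=
  Derive (fun u' => Derive (fun v' => ln (cdens alpha delta u' v')) v) u.

(* Main.v *)
Require Import Defs.
From Stdlib Require Import Reals Lra Psatz.
From Coquelicot Require Import Coquelicot.
Open Scope R_scope.

Definition g (a x : R) := a * (1 - 2 * x) * exp (a * (x - x ^ 2)).
Definition gp (a x : R) := a * exp (a * (x - x ^ 2)) * (a * (1 - 2 * x) ^ 2 - 2).

Lemma cdens_g a d u v : cdens a d u v = 1 + d * g a u * g a v.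
Proof.
  unfold cdens, g.
  replace (a * (u - u ^ 2 + v - v ^ 2)) with (a * (u - u ^ 2) + a * (v - v ^ 2)) by ring.
  rewrite exp_plus. ring.
Qed.

Lemma g_deriv a x : is_derive (g a) x (gp a x).
Proof.
  unfold g, gp. auto_derive; [exact I|].
  replace (x + - (x * (x * 1))) with (x - x ^ 2) by ring. ring.
Qed.


Lemma gp_prod a x y : a <= 2 -> 0 <= x <= 1 -> 0 <= y <= 1 -> 0 <= gp a x * gp a y.
Proof.
  intros ha hx hy. unfold gp.
  set (ex := exp (a * (x - x ^ 2))). set (ey := exp (a * (y - y ^ 2))).
  assert (0 < ex) by apply exp_pos. assert (0 < ey) by apply exp_pos.
  assert (0 <= (1-2*x)^2 <= 1) by (split; [apply pow2_ge_0|nra]).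
  assert (0 <= (1-2*y)^2 <= 1) by (split; [apply pow2_ge_0|nra]).
  assert (0 <= (a * (1 - 2 * x) ^ 2 - 2) * (a * (1 - 2 * y) ^ 2 - 2)).
  { destruct (Rle_dec a 0).
    - assert (a * (1 - 2 * x) ^ 2 - 2 <= 0) by nra.
      assert (a * (1 - 2 * y) ^ 2 - 2 <= 0) by nra. nra.
    - assert (a * (1 - 2 * x) ^ 2 - 2 <= 0) by nra.
      assert (a * (1 - 2 * y) ^ 2 - 2 <= 0) by nra. nra. }
  replace (a * ex * (a * (1 - 2 * x) ^ 2 - 2) * (a * ey * (a * (1 - 2 * y) ^ 2 - 2)))
    with ((a*a) * (ex*ey) * ((a * (1 - 2 * x) ^ 2 - 2) * (a * (1 - 2 * y) ^ 2 - 2))) by ring.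
  apply Rmult_le_pos; [apply Rmult_le_pos|]; nra.
Qed.

Lemma g_mvt a x1 x2 : x1 < x2 -> exists c, g a x2 - g a x1 = gp a c * (x2 - x1) /\ x1 < c < x2.
Proof.
  intros h. apply MVT_cor2; auto. intros c _. apply is_derive_Reals, g_deriv.
Qed.

Lemma part1 a d : a <= 2 -> 0 <= d ->
  forall u1 u2 v1 v2 : R,
      0 <= u1 -> u1 < u2 -> u2 <= 1 ->
      0 <= v1 -> v1 < v2 -> v2 <= 1 ->
      cdens a d u1 v1 * cdens a d u2 v2
        - cdens a d u1 v2 * cdens a d u2 v1 >= 0.
Proof.
  intros ha hd u1 u2 v1 v2 h1 h2 h3 h4 h5 h6.
  rewrite !cdens_g.
  destruct (g_mvt a u1 u2 h2) as [cu [Hu Hcu]].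
  destruct (g_mvt a v1 v2 h5) as [cv [Hv Hcv]].
  replace ((1 + d * g a u1 * g a v1) * (1 + d * g a u2 * g a v2) -
   (1 + d * g a u1 * g a v2) * (1 + d * g a u2 * g a v1))
   with (d * ((g a u2 - g a u1) * (g a v2 - g a v1))) by ring.
  rewrite Hu, Hv.
  assert (0 <= gp a cu * gp a cv) by (apply gp_prod; lra).
  replace (gp a cu * (u2 - u1) * (gp a cv * (v2 - v1))) with
    ((gp a cu * gp a cv) * ((u2 - u1) * (v2 - v1))) by ring.
  apply Rle_ge. apply Rmult_le_pos; auto. apply Rmult_le_pos; nra.
Qed.

Lemma affine_g a K x : is_derive (fun y => 1 + K * g a y) x (K * gp a x).
Proof.
  assert (H : is_derive (fun y => plus 1 (K * g a y)) x (plus zero (K * gp a x))).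
  { apply (is_derive_plus (fun _ => 1) (fun y => K * g a y)).
    apply (@is_derive_const R_AbsRing R_NormedModule). apply is_derive_scal, g_deriv. }
  rewrite plus_zero_l in H. exact H.
Qed.

Lemma inner_deriv a d u v : 0 < cdens a d u v ->
  is_derive (fun v' => ln (cdens a d u v')) v (d * g a u * gp a v / cdens a d u v).
Proof.
  intros hc.
  apply is_derive_ext with (fun v' => ln (1 + (d * g a u) * g a v')).
  { intros t. rewrite cdens_g. reflexivity. }
  assert (Hc : 0 < 1 + (d * g a u) * g a v) by (rewrite cdens_g in hc; lra).
  assert (H := is_derive_comp ln (fun v' => 1 + (d * g a u) * g a v') v _ _
     (is_derive_ln _ Hc) (affine_g a (d * g a u) v)).
  replace (d * g a u * gp a v / cdens a d u v) with (scal (d * g a u * gp a v) (/ (1 + d * g a u * g a v))).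
  exact H.
  rewrite cdens_g. unfold scal; simpl; unfold mult; simpl. field. lra.
Qed.

Lemma inner_eq a d u v : 0 < cdens a d u v ->
  Derive (fun v' => ln (cdens a d u v')) v = d * g a u * gp a v / cdens a d u v.
Proof. intros h. apply is_derive_unique, inner_deriv, h. Qed.

Lemma cdens_u_deriv a d u v : is_derive (fun u' => cdens a d u' v) u (d * g a v * gp a u).
Proof.
  apply is_derive_ext with (fun u' => 1 + (d * g a v) * g a u').
  { intros t. rewrite cdens_g; f_equal; rewrite !Rmult_assoc; f_equal; apply Rmult_comm. }
  apply affine_g.
Qed.

Lemma loc_pos a d u v : 0 < cdens a d u v -> locally u (fun u' => 0 < cdens a d u' v).
Proof.
  intros hc.
  assert (Hcont := ex_derive_continuous _ _ (ex_intro _ _ (cdens_u_deriv a d u v))).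
  unfold continuous in Hcont.
  assert (He : 0 < cdens a d u v / 2) by lra.
  generalize (proj1 (filterlim_locally _ _) Hcont (mkposreal _ He)).
  apply filter_imp. intros x Hx. simpl in Hx. unfold ball in Hx; simpl in Hx. unfold AbsRing_ball, abs, minus, plus, opp in Hx; simpl in Hx.
  apply Rabs_def2 in Hx. lra.
Qed.

Lemma main_pos a d u v : a <= 2 -> 0 <= d -> 0 <= u <= 1 -> 0 <= v <= 1 ->
  0 < cdens a d u v -> mixed_dlog a d u v >= 0.
Proof.
  intros ha hd hu hv hc. unfold mixed_dlog.
  rewrite (Derive_ext_loc _ (fun u' => (d * g a u' * gp a v) / cdens a d u' v)).
  2:{ apply (filter_imp (fun u' => 0 < cdens a d u' v)); [|apply loc_pos, hc].
      intros x Hx. apply inner_eq, Hx. }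
  assert (Hf : is_derive (fun t => d * g a t * gp a v) u (d * gp a v * gp a u)).
  { apply is_derive_ext with (fun t => (d * gp a v) * g a t).
    { intros t; change (@eq R (d * gp a v * g a t) (d * g a t * gp a v)); ring. }
    apply is_derive_scal, g_deriv. }
  assert (H := is_derive_div _ _ u _ _ Hf (cdens_u_deriv a d u v) (Rgt_not_eq _ _ hc)).
  assert (E := is_derive_unique _ _ _ H). cbv beta in E. change (Derive (fun u' : R => d * g a u' * gp a v / cdens a d u' v) u >= 0). rewrite E.
  assert (Hp := gp_prod a u v ha hu hv).
  replace ((d * gp a v * gp a u * cdens a d u v - d * g a u * gp a v * (d * g a v * gp a u)) /
      cdens a d u v ^ 2) with (d * (gp a u * gp a v) / cdens a d u v ^ 2).
  2:{ rewrite cdens_g. field. rewrite cdens_g in hc; lra. }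
  apply Rle_ge. unfold Rdiv. apply Rmult_le_pos. apply Rmult_le_pos; auto.
  apply Rlt_le, Rinv_0_lt_compat. apply pow_lt, hc.
Qed.

Lemma texp_le t : 0 <= t -> t <= exp (t - 1) /\ (t <> 1 -> t < exp (t - 1)).
Proof.
  intros ht.
  assert (Hs : exp (t - 1) = exp ((t-1)/2) * exp ((t-1)/2)).
  { rewrite <- exp_plus. f_equal. field. }
  assert (H1 := exp_ineq1_le ((t-1)/2)).
  rewrite Hs. set (E := exp ((t-1)/2)) in *.
  assert (HE : (1+t)/2 * ((1+t)/2) <= E * E) by (apply Rmult_le_compat; lra).
  split.
  - assert (0 <= (t-1)^2) by apply pow2_ge_0. nra.
  - intros hne. assert (0 < (t-1)^2) by (apply pow2_gt_0; lra). nra.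
Qed.

Lemma g0 a : g a 0 = a.
Proof. unfold g. replace (a * (0 - 0 ^ 2)) with 0 by ring. rewrite exp_0. ring. Qed.
Lemma g1 a : g a 1 = - a.
Proof. unfold g. replace (a * (1 - 1 ^ 2)) with 0 by ring. rewrite exp_0. ring. Qed.

Lemma gsq a x : a <= 2 -> 0 <= x <= 1 ->
  g a x ^ 2 <= a ^ 2 /\ (0 < x < 1 -> a <> 0 -> g a x ^ 2 < a ^ 2).
Proof.
  intros ha hx.
  set (t := (1 - 2 * x) ^ 2).
  assert (ht0 : 0 <= t) by (apply pow2_ge_0).
  assert (ht1 : t <= 1) by (unfold t; nra).
  assert (Hsq : g a x ^ 2 = a ^ 2 * (t * exp (2 * a * (x - x ^ 2)))).
  { unfold g, t. replace (2 * a * (x - x ^ 2)) with (a * (x - x ^ 2) + a * (x - x ^ 2)) by ring.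
    rewrite exp_plus. ring. }
  assert (Hle : exp (2 * a * (x - x ^ 2)) <= exp (1 - t)).
  { assert (1 - t = 4 * (x - x ^ 2)) by (unfold t; ring).
    assert (0 <= x - x ^ 2) by nra.
    assert (Hl : 2 * a * (x - x ^ 2) <= 1 - t) by nra.
    destruct (Rle_lt_or_eq_dec _ _ Hl) as [lt|eq];
      [apply Rlt_le, exp_increasing, lt | rewrite eq; lra]. }
  assert (HEF : exp (1 - t) * exp (t - 1) = 1).
  { rewrite <- exp_plus. replace (1 - t + (t - 1)) with 0 by ring. apply exp_0. }
  destruct (texp_le t ht0) as [T1 T2].
  assert (Ep := exp_pos (1 - t)). assert (Ep2 := exp_pos (2 * a * (x - x ^ 2))).
  assert (Hb : t * exp (2 * a * (x - x ^ 2)) <= 1).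
  { apply Rle_trans with (t * exp (1 - t)). apply Rmult_le_compat_l; lra. nra. }
  rewrite Hsq. split.
  - assert (0 <= a ^ 2) by apply pow2_ge_0. nra.
  - intros hx' ha0. assert (0 < a ^ 2) by (apply pow2_gt_0; auto).
    assert (t < 1) by (unfold t; nra).
    assert (t < exp (t - 1)) by (apply T2; lra).
    assert (t * exp (2 * a * (x - x ^ 2)) < 1).
    { apply Rle_lt_trans with (t * exp (1 - t)). apply Rmult_le_compat_l; lra. nra. }
    nra.
Qed.

Lemma c_analysis a d u v : a <= 2 -> 0 <= d -> (a <> 0 -> d <= 1 / a ^ 2) ->
  0 <= u <= 1 -> 0 <= v <= 1 ->
  0 <= cdens a d u v /\
  (cdens a d u v <= 0 -> a <> 0 /\ d * a ^ 2 = 1 /\ ((u = 0 /\ v = 1) \/ (u = 1 /\ v = 0))).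
Proof.
  intros ha hd hb hu hv. rewrite cdens_g.
  destruct (Req_dec a 0) as [a0|a0].
  { subst a. unfold g. split; [|intros; exfalso]; nra. }
  assert (hda : d * a ^ 2 <= 1).
  { specialize (hb a0). assert (0 < a ^ 2) by (apply pow2_gt_0; auto).
    apply Rmult_le_reg_r with (/ a ^ 2). apply Rinv_0_lt_compat; auto.
    rewrite Rmult_assoc, Rinv_r, Rmult_1_r, Rmult_1_l by lra. unfold Rdiv in hb. lra. }
  destruct (gsq a u ha hu) as [Gu Gu'].
  destruct (gsq a v ha hv) as [Gv Gv'].
  assert (Hgu : 0 <= g a u ^ 2) by apply pow2_ge_0.
  assert (Hgv : 0 <= g a v ^ 2) by apply pow2_ge_0.
    assert (Hda4 : d ^ 2 * (a ^ 2 * a ^ 2) <= 1).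
    { replace (d ^ 2 * (a ^ 2 * a ^ 2)) with ((d * a ^ 2) * (d * a ^ 2)) by ring.
      assert (0 <= d * a ^ 2) by (apply Rmult_le_pos; [lra|apply pow2_ge_0]).
      assert (d * a ^ 2 * (d * a ^ 2) <= 1 * 1) by (apply Rmult_le_compat; lra). lra. }
  assert (HP : (d * g a u * g a v) ^ 2 <= 1).
  { replace ((d * g a u * g a v) ^ 2) with ((d ^ 2) * (g a u ^ 2 * g a v ^ 2)) by ring.
    assert (0 <= d ^ 2) by apply pow2_ge_0.
    assert (g a u ^ 2 * g a v ^ 2 <= a ^ 2 * a ^ 2).
    { apply Rmult_le_compat; auto. }
    apply Rle_trans with (d ^ 2 * (a ^ 2 * a ^ 2)); auto. apply Rmult_le_compat_l; auto. }
  assert (HP1 : -1 <= d * g a u * g a v) by nra.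
  split; [lra|]. intros hc.
  assert (HPe : d * g a u * g a v = -1) by lra.
  assert (hdpos : 0 < d).
  { destruct (Req_dec d 0) as [e|e]; [rewrite e in HPe; lra | lra]. }
  assert (Eu : u = 0 \/ u = 1).
  { destruct (Rlt_dec 0 u); destruct (Rlt_dec u 1); try lra.
    exfalso. specialize (Gu' (conj r r0) a0).
    assert ((d * g a u * g a v) ^ 2 = 1) by (rewrite HPe; ring).
    assert (0 < g a v ^ 2).
    { destruct (Req_dec (g a v) 0) as [e|e]. rewrite e in HPe; lra. apply pow2_gt_0; auto. }
    replace ((d * g a u * g a v) ^ 2) with ((d ^ 2) * (g a u ^ 2 * g a v ^ 2)) in H by ring.
    assert (0 < d ^ 2) by (apply pow2_gt_0; lra).
    assert (g a u ^ 2 * g a v ^ 2 < a ^ 2 * a ^ 2) by nra.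
    assert (d ^ 2 * (g a u ^ 2 * g a v ^ 2) < d ^ 2 * (a ^ 2 * a ^ 2)) by (apply Rmult_lt_compat_l; auto).
    lra. }
  assert (Ev : v = 0 \/ v = 1).
  { destruct (Rlt_dec 0 v); destruct (Rlt_dec v 1); try lra.
    exfalso. specialize (Gv' (conj r r0) a0).
    assert ((d * g a u * g a v) ^ 2 = 1) by (rewrite HPe; ring).
    assert (0 < g a u ^ 2).
    { destruct (Req_dec (g a u) 0) as [e|e]. rewrite e in HPe; lra. apply pow2_gt_0; auto. }
    replace ((d * g a u * g a v) ^ 2) with ((d ^ 2) * (g a u ^ 2 * g a v ^ 2)) in H by ring.
    assert (0 < d ^ 2) by (apply pow2_gt_0; lra).
    assert (g a u ^ 2 * g a v ^ 2 < a ^ 2 * a ^ 2) by nra.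
    assert (d ^ 2 * (g a u ^ 2 * g a v ^ 2) < d ^ 2 * (a ^ 2 * a ^ 2)) by (apply Rmult_lt_compat_l; auto).
    lra. }
  split; auto.
  destruct Eu as [-> | ->]; destruct Ev as [-> | ->];
    rewrite ?g0, ?g1 in HPe; rewrite ?g0, ?g1 in hc;
    (split; [nra| ]); try (left; split; reflexivity); try (right; split; reflexivity);
    exfalso; assert (0 < a ^ 2) by (apply pow2_gt_0; auto); nra.
Qed.

Lemma Derive_seq f x : Derive f x =
  real (Lim_seq (fun n => (f (x + / (INR n + 1)) - f x) * (INR n + 1))).
Proof.
  unfold Derive, Lim. f_equal. apply Lim_seq_ext. intros n. simpl.
  rewrite Rplus_0_l. unfold Rdiv. rewrite Rinv_inv. reflexivity.
Qed.

Lemma Lim_INR1 : Lim_seq (fun n => INR n + 1) = p_infty.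
Proof.
  rewrite <- Lim_seq_INR, <- (Lim_seq_incr_1 INR). apply Lim_seq_ext. intros n. rewrite S_INR. reflexivity.
Qed.

Lemma Derive_const_tail f x K :
  eventually (fun n => f (x + / (INR n + 1)) = K) -> Derive f x = 0.
Proof.
  intros Hev. rewrite Derive_seq.
  rewrite (Lim_seq_ext_loc _ (fun n => (K - f x) * (INR n + 1))).
  2:{ revert Hev. apply filter_imp. intros n Hn. rewrite Hn. reflexivity. }
  rewrite Lim_seq_scal_l, Lim_INR1.
  unfold Rbar_mult, Rbar_mult'.
  destruct (Rle_dec 0 (K - f x)) as [h|h]; [destruct (Rle_lt_or_eq_dec 0 (K - f x) h)|]; reflexivity.
Qed.

Lemma Derive_minf_tail f x k : 0 < k ->
  eventually (fun n => f (x + / (INR n + 1)) <= - k * (INR n + 1)) -> Derive f x = 0.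
Proof.
  intros hk Hev. rewrite Derive_seq.
  rewrite (is_lim_seq_unique _ m_infty); [reflexivity|].
  apply is_lim_seq_spec. intros M.
  set (T := Rabs (f x) + Rabs M + 1).
  assert (HI := proj2 (is_lim_seq_spec _ _) is_lim_seq_INR (T / k)). simpl in HI.
  generalize (filter_and _ _ Hev HI). apply filter_imp.
  intros n [H1 H2].
  assert (Hn : 0 <= INR n) by apply pos_INR.
  set (m := INR n + 1) in *.
  assert (Hm : T < k * m).
  { apply Rmult_lt_compat_l with (r := k) in H2; auto. unfold Rdiv in H2.
    rewrite <- Rmult_assoc, (Rmult_comm k T), Rmult_assoc, Rinv_r, Rmult_1_r in H2 by lra.
    unfold m; nra. }
  pose proof (Rabs_maj2 (f x)). pose proof (Rabs_maj2 M).
  assert (Hq : f (x + / m) - f x <= - Rabs M - 1) by (unfold T in Hm; nra).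
  assert (0 < m) by (unfold m; lra).
  assert (1 <= m) by (unfold m; lra).
  assert (- Rabs M - 1 < 0) by (pose proof (Rabs_pos M); lra).
  nra.
Qed.

Lemma ln_nonpos x : x <= 0 -> ln x = 0.
Proof. intros h. unfold ln. destruct (Rlt_dec 0 x); [exfalso; lra|reflexivity]. Qed.

Lemma gp0 a : gp a 0 = a * (a - 2).
Proof. unfold gp. replace (a * (0 - 0 ^ 2)) with 0 by ring. rewrite exp_0. ring. Qed.
Lemma gp1 a : gp a 1 = a * (a - 2).
Proof. unfold gp. replace (a * (1 - 1 ^ 2)) with 0 by ring. rewrite exp_0. ring. Qed.

Lemma ev_large T : eventually (fun n => T < INR n + 1).
Proof.
  generalize (proj2 (is_lim_seq_spec _ _) is_lim_seq_INR T). simpl.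
  apply filter_imp. intros n H. lra.
Qed.

Lemma exp_lb_abs a y : 0 <= y -> 1 - Rabs a * y <= exp (a * y).
Proof.
  intros hy. apply Rle_trans with (1 + a * y); [|apply exp_ineq1_le].
  pose proof (Rabs_maj2 a). pose proof (Rle_abs a). nra.
Qed.

Lemma A2_bound a d h : a < 2 -> d * a ^ 2 = 1 -> 0 < h -> 2 * (2 + Rabs a) * h <= 1 ->
  0 < cdens a d h 1 ->
  d * g a h * gp a 1 / cdens a d h 1 <= - ((2 - a) / (2 * (2 + Rabs a))) / h.
Proof.
  intros ha hda hh hsm hpos.
  set (s := Rabs a) in *. assert (hs : 0 <= s) by apply Rabs_pos.
  assert (hh4 : h <= 1/4) by nra.
  set (E := exp (a * (h - h ^ 2))).
  set (P := (1 - 2 * h) * E).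
  assert (Hc : cdens a d h 1 = 1 - P).
  { rewrite cdens_g, g1. unfold P, E, g. replace (d * (a * (1 - 2 * h) * exp (a * (h - h ^ 2))) * - a)
      with (- (d * a ^ 2) * ((1 - 2 * h) * exp (a * (h - h ^ 2)))) by ring. rewrite hda. ring. }
  assert (Hn : d * g a h * gp a 1 = (a - 2) * P).
  { rewrite gp1. unfold P, E, g. replace (d * (a * (1 - 2 * h) * exp (a * (h - h ^ 2))) * (a * (a - 2)))
      with ((d * a ^ 2) * (a - 2) * ((1 - 2 * h) * exp (a * (h - h ^ 2)))) by ring. rewrite hda. ring. }
  assert (HE : 1 - s * (h - h ^ 2) <= E) by (unfold E, s; apply exp_lb_abs; nra).
  assert (HE1 : 1 - s * h <= E) by nra.
  assert (h2 : 1 - 2 * h >= 0) by nra.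
  assert (HP : 1 - (2 + s) * h <= P) by (unfold P; nra).
  rewrite Hc in hpos |- *. rewrite Hn.
  assert (HP12 : 1/2 <= P) by nra.
  assert (Hw : 1 - P <= (2 + s) * h) by lra.
  assert (Hi : / ((2 + s) * h) <= / (1 - P)) by (apply Rinv_le_contravar; lra).
  assert (Hpos2 : 0 < (2 + s) * h) by nra.
  assert (Hkey : / (2 * (2 + s) * h) <= P * / (1 - P)).
  { replace (/ (2 * (2 + s) * h)) with (1/2 * / ((2 + s) * h)) by (field; lra).
    apply Rmult_le_compat; try lra. apply Rlt_le, Rinv_0_lt_compat; lra. }
  replace ((a - 2) * P / (1 - P)) with (- (2 - a) * (P * / (1 - P))) by (field; lra).
  replace (- ((2 - a) / (2 * (2 + s))) / h) with (- (2 - a) * / (2 * (2 + s) * h)) by (field; lra).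
  apply Rmult_le_compat_neg_l; lra.
Qed.

Lemma cdens_B a d h v : cdens a d (1 + h) v =
  1 - (d * a ^ 2) * ((1 + 2 * h) * exp (- a * h * (1 + h))) * ((1 - 2 * v) * exp (a * (v - v ^ 2))).
Proof.
  rewrite cdens_g. unfold g.
  replace (a * (1 + h - (1 + h) ^ 2)) with (- a * h * (1 + h)) by ring. ring.
Qed.

Lemma B2_A a h : a < 2 -> 0 < h -> 20 * h <= 2 - a -> h <= 1 ->
  1 < (1 + 2 * h) * exp (- a * h * (1 + h)).
Proof.
  intros ha hh hs h1.
  assert (He := exp_ineq1_le (- a * h * (1 + h))).
  apply Rlt_le_trans with ((1 + 2 * h) * (1 + - a * h * (1 + h))).
  - destruct (Rle_dec a 0).
    + assert (0 <= - a * h * (1 + h)) by (apply Rmult_le_pos; [nra|lra]). nra.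
    + assert (Hh2 : 0 < h ^ 2) by (apply pow_lt; lra).
      assert (Hh3 : h ^ 3 <= h ^ 2) by (replace (h ^ 3) with (h ^ 2 * h) by ring; nra).
      assert (3 * a * h ^ 2 + 2 * a * h ^ 3 <= 10 * h ^ 2) by nra.
      assert (10 * h ^ 2 < (2 - a) * h) by nra.
      nra.
  - apply Rmult_le_compat_l; lra.
Qed.

Lemma B2_neg a d h v : d * a ^ 2 = 1 ->
  1 < (1 + 2 * h) * exp (- a * h * (1 + h)) ->
  0 <= v ->
  v * ((1 + 2 * h) * exp (- a * h * (1 + h))) * (2 + Rabs a) < (1 + 2 * h) * exp (- a * h * (1 + h)) - 1 ->
  cdens a d (1 + h) v < 0.
Proof.
  intros hda hA hv hsm.
  rewrite cdens_B, hda, Rmult_1_l.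
  set (A := (1 + 2 * h) * exp (- a * h * (1 + h))) in *.
  set (s := Rabs a). assert (hs : 0 <= s) by apply Rabs_pos.
  assert (hv2 : v * (2 + s) < 1).
  { apply Rmult_lt_reg_l with A; [lra|]. unfold s. nra. }
  assert (hv1 : v <= 1/2) by nra.
  assert (HE : 1 - s * (v - v ^ 2) <= exp (a * (v - v ^ 2))).
  { unfold s; apply exp_lb_abs. replace (v - v ^ 2) with (v * (1 - v)) by ring. apply Rmult_le_pos; lra. }
  assert (HE1 : 1 - s * v <= exp (a * (v - v ^ 2))) by nra.
  assert (Hr : 1 - (2 + s) * v <= (1 - 2 * v) * exp (a * (v - v ^ 2))) by nra.
  assert (A * (1 - (2 + s) * v) <= A * ((1 - 2 * v) * exp (a * (v - v ^ 2)))) by (apply Rmult_le_compat_l; lra).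
  unfold s in *. nra.
Qed.

Lemma B1_pos d h : d * 2 ^ 2 = 1 -> 0 < h -> 0 < cdens 2 d (1 + h) 0.
Proof.
  intros hda hh. rewrite cdens_B, hda.
  replace (0 - 0 ^ 2) with 0 by ring. rewrite Rmult_0_r, exp_0.
  assert (He := exp_ineq1 (2 * h * (1 + h))).
  assert (Hm : exp (- (2) * h * (1 + h)) * exp (2 * h * (1 + h)) = 1).
  { rewrite <- exp_plus. replace (- (2) * h * (1 + h) + 2 * h * (1 + h)) with 0 by ring. apply exp_0. }
  assert (0 < exp (- (2) * h * (1 + h))) by apply exp_pos.
  assert (2 * h * (1 + h) <> 0) by nra.
  specialize (He H0).
  assert ((1 + 2 * h) * exp (- (2) * h * (1 + h)) < exp (2 * h * (1 + h)) * exp (- (2) * h * (1 + h))).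
  { apply Rmult_lt_compat_r; auto. nra. }
  rewrite Rmult_comm in Hm. lra.
Qed.

Lemma hn_pos n : 0 < / (INR n + 1).
Proof. apply Rinv_0_lt_compat. pose proof (pos_INR n). lra. Qed.
Lemma hn_le1 n : / (INR n + 1) <= 1.
Proof. pose proof (pos_INR n). rewrite <- Rinv_1. apply Rinv_le_contravar; lra. Qed.
Lemma hn_small T n : T < INR n + 1 -> T * / (INR n + 1) < 1.
Proof.
  intros H. pose proof (pos_INR n).
  apply Rmult_lt_reg_r with (INR n + 1); [lra|].
  rewrite Rmult_assoc, Rinv_l, Rmult_1_r, Rmult_1_l by lra. exact H.
Qed.

Lemma corner a d u v : a <= 2 -> 0 <= d -> (a <> 0 -> d <= 1 / a ^ 2) ->
  a <> 0 -> d * a ^ 2 = 1 -> ((u = 0 /\ v = 1) \/ (u = 1 /\ v = 0)) ->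
  mixed_dlog a d u v >= 0.
Proof.
  intros ha hd hb a0 hda [[-> ->] | [-> ->]]; unfold mixed_dlog; apply Req_ge.
  -
    assert (Hpos : forall n, 0 < cdens a d (0 + / (INR n + 1)) 1).
    { intros n. rewrite Rplus_0_l. pose proof (hn_pos n). pose proof (hn_le1 n).
      destruct (c_analysis a d (/ (INR n + 1)) 1 ha hd hb ltac:(lra) ltac:(lra)) as [H1 H2].
      destruct (Rle_lt_dec (cdens a d (/ (INR n + 1)) 1) 0) as [h|h]; auto.
      destruct (H2 h) as [_ [_ [[e _]|[_ e]]]]; lra. }
    destruct (Rle_lt_or_eq_dec _ _ ha) as [ha2|ha2].
    + apply Derive_minf_tail with ((2 - a) / (2 * (2 + Rabs a))).
      { apply Rdiv_lt_0_compat. lra. pose proof (Rabs_pos a). lra. }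
      generalize (ev_large (2 * (2 + Rabs a))). apply filter_imp. intros n Hn.
      rewrite inner_eq by apply Hpos. rewrite Rplus_0_l.
      pose proof (Hpos n) as Hp. rewrite Rplus_0_l in Hp.
      pose proof (hn_pos n).
      assert (Hs : 2 * (2 + Rabs a) * / (INR n + 1) <= 1) by (apply Rlt_le, hn_small, Hn).
      eapply Rle_trans. apply A2_bound; auto.
      unfold Rdiv. rewrite Rinv_inv. lra.
    + subst a. apply Derive_const_tail with 0. exists 0%nat. intros n _.
      rewrite inner_eq by apply Hpos. rewrite gp1. unfold Rdiv. ring.
  -
    destruct (Rle_lt_or_eq_dec _ _ ha) as [ha2|ha2].
    + apply Derive_const_tail with 0.
      generalize (ev_large (20 / (2 - a))). apply filter_imp. intros n Hn.
      set (h := / (INR n + 1)).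
      assert (hh : 0 < h) by apply hn_pos.
      assert (hh1 : h <= 1) by apply hn_le1.
      assert (H20 : 20 * h <= 2 - a).
      { assert (20 / (2 - a) * h < 1) by (apply hn_small, Hn).
        unfold Rdiv in H. apply Rmult_lt_compat_l with (r := 2 - a) in H; [|lra].
        replace ((2 - a) * (20 * / (2 - a) * h)) with (20 * h) in H by (field; lra). lra. }
      assert (HA := B2_A a h ha2 hh H20 hh1).
      set (A := (1 + 2 * h) * exp (- a * h * (1 + h))) in *.
      apply Derive_const_tail with 0.
      generalize (ev_large (A * (2 + Rabs a) / (A - 1))). apply filter_imp. intros m Hm.
      rewrite Rplus_0_l. apply ln_nonpos, Rlt_le, B2_neg; auto.
      * apply Rlt_le, hn_pos.
      * assert (A * (2 + Rabs a) / (A - 1) * / (INR m + 1) < 1) by (apply hn_small, Hm).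
        unfold Rdiv in H. apply Rmult_lt_compat_l with (r := A - 1) in H; [|lra].
        replace ((A - 1) * (A * (2 + Rabs a) * / (A - 1) * / (INR m + 1))) with
          (/ (INR m + 1) * A * (2 + Rabs a)) in H by (field; split; [pose proof (pos_INR m); lra | lra]).
        unfold A in H. lra.
    + subst a. apply Derive_const_tail with 0. exists 0%nat. intros n _.
      rewrite inner_eq. rewrite gp0. unfold Rdiv. ring.
      apply B1_pos; auto. apply hn_pos.
Qed.

Theorem proposition3 (alpha delta : R)
  (halpha : alpha <= 2) (hdelta : 0 <= delta)
  (hbound : alpha <> 0 -> delta <= 1 / alpha ^ 2) :
  (forall u1 u2 v1 v2 : R,
      0 <= u1 -> u1 < u2 -> u2 <= 1 ->
      0 <= v1 -> v1 < v2 -> v2 <= 1 ->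
      cdens alpha delta u1 v1 * cdens alpha delta u2 v2
        - cdens alpha delta u1 v2 * cdens alpha delta u2 v1 >= 0)
  /\
  (forall u v : R, 0 <= u <= 1 -> 0 <= v <= 1 ->
      mixed_dlog alpha delta u v >= 0).
Proof.
  split.
  - apply part1; auto.
  - intros u v hu hv.
    destruct (Rle_lt_dec (cdens alpha delta u v) 0) as [h|h].
    + destruct (c_analysis alpha delta u v halpha hdelta hbound hu hv) as [_ H].
      destruct (H h) as [a0 [hda hc]].
      apply corner; auto.
    + apply main_pos; auto.
Qed.
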